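(* Consider the uncertain system $x^j_{t+1}=Ax^j_t+Bu^j_t+w^j_t$ at iteration $j\ge 1$ in closed loop with the LMPC input $u^j_t=\pi^{j,*}_{t|t}(x^j_t)$ (both described in the context). Suppose $x^j_0\in\mathcal{C}^j$. Then for every time $t\ge 0$ and every disturbance realization with $w^j_t\in\mathcal{W}$, the optimal control problem $C^{\mathrm{LMPC},j}_{t\to t+N}(x^j_t,N^j_t)$ is feasible for some $N^j_t\in\{0,\dots,N\}$, and the closed-loop system satisfies $x^j_t\in\mathcal{X}$ and $u^j_t\in\mathcal{U}$ for all $t\ge 0$.
   Context: System: $x_{t+1}=Ax_t+Bu_t+w_t$ with known $A\in\mathbb{R}^{n\times n}$, $B\in\mathbb{R}^{n\times d}$. The disturbances take values in $\mathcal{W}\subset\mathbb{R}^n$, a compact polytope containing the origin with vertices $v_w^1,\dots,v_w^l$. Constraints: $x_t\in\mathcal{X}$, $u_t\in\mathcal{U}$, with $\mathcal{X}\subset\mathbb{R}^n$, $\mathcal{U}\subset\mathbb{R}^d$ convex, compact, containing the origin. A gain $K$ and a polyhedron $\mathcal{O}\subset\mathcal{X}$ with vertices $v_o^1,\dots,v_o^m$ are given such that $x\in\mathcal{O}\Rightarrow (A+BK)x+w\in\mathcal{O}$ for all $w\in\mathcal{W}$; $K\mathcal{O}=\{Kx:x\in\mathcal{O}\}$. Write $|x|_{\mathcal{S}}=\inf_{y\in\mathcal{S}}\|x-y\|_2$. The stage cost $h:\mathbb{R}^n\times\mathbb{R}^d\to\mathbb{R}$ is continuous and jointly convex, and there are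 $\mathcal{K}_\infty$ functions with $\alpha^l_x(|x|_\mathcal{O})\le h(x,0)\le\alpha^u_x(|x|_\mathcal{O})$ and $\alpha^l_u(|u|_{K\mathcal{O}})\le h(0,u)\le\alpha^u_u(|u|_{K\mathcal{O}})$ for all $x,u$. A horizon $N\ge1$ is fixed. Data-based construction. Set $\mathcal{CS}^0=\mathcal{O}$, $\mathbf{X}^0=[v_o^1,\dots,v_o^m]$, $\mathbf{U}^0=[Kv_o^1,\dots,Kv_o^m]$, $\mathbf{J}^0=[0,\dots,0]$, $Q^0\equiv0$ on $\mathcal{O}$. For each previous iteration $i\in\{1,\dots,j-1\}$ there are a duration $T^i$, a stored closed-loop trajectory $x^i_0,\dots,x^i_{T^i}$ and, for each $t\in\{0,\dots,T^i\}$, an $N$-step policy $\boldsymbol{\pi}^{i,*}_t=[\pi^{i,*}_{t|t},\dots,\pi^{i,*}_{t+N-1|t}]$ (maps $\mathbb{R}^n\to\mathbb{R}^d$) with $x^i_{t+1}=Ax^i_t+B\pi^{i,*}_{t|t}(x^i_t)+w^i_t$, such that (standing assumption) the predicted system $x_{s+1|t}=Ax_{s|t}+B\pi^{i,*}_{s|t}(x_{s|t})+w_{s|t}$, $s=t,\dots,t+N-1$, $x_{t|t}=x^i_t$, satisfies $x_{s|t}\in\mathcal{X}$, $\pi^{i,*}_{s|t}(x_{s|t})\in\mathcal{U}$ and $x_{t+N|t}\in\mathcal{CS}^{i-1}$ for all disturbances in $\mathcal{W}$. Reachable sets: $\mathcal{R}^i_{t\to t}=\{x^i_t\}$, $\mathcal{R}^i_{t\to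 s+1}=\{Ax+B\pi^{i,*}_{s|t}(x)+w: x\in\mathcal{R}^i_{t\to s},w\in\mathcal{W}\}$. Then $\mathcal{CS}^i=\mathrm{Conv}\big(\bigcup_{t=0}^{T^i}\bigcup_{s=t}^{t+N}\mathcal{R}^i_{t\to s}\cup\mathcal{CS}^{i-1}\big)$. For $s\in\{t,\dots,t+N\}$ let $v^{i,1}_{s|t},\dots,v^{i,l^{s-t}}_{s|t}$ be the vertices of $\mathcal{R}^i_{t\to s}$. Define costs-to-go backwards: $J^i_{t+N|t}(v^{i,r}_{t+N|t})=Q^{i-1}(v^{i,r}_{t+N|t})$ and, for $s=t+N-1,\dots,t$ and $v=v^{i,r}_{s|t}$, $J^i_{s|t}(v)=\min_{\gamma\ge0}\, h(v,\pi^{i,*}_{s|t}(v))+\sum_q\gamma_qJ^i_{s+1|t}(v^{i,q}_{s+1|t})$ s.t. $\sum_q\gamma_qv^{i,q}_{s+1|t}=Av+B\pi^{i,*}_{s|t}(v)$, $\sum_q\gamma_q=1$. The matrices $\mathbf{X}^i,\mathbf{U}^i$ and row vector $\mathbf{J}^i$ are obtained from $\mathbf{X}^{i-1},\mathbf{U}^{i-1},\mathbf{J}^{i-1}$ by appending, for all $t\in\{0,\dots,T^i\}$, $s\in\{t,\dots,t+N-1\}$ and all $r$, the columns $v^{i,r}_{s|t}$, $\pi^{i,*}_{s|t}(v^{i,r}_{s|t})$ and the entries $J^i_{s|t}(v^{i,r}_{s|t})$. Let $\Lambda^i(x)=\{\lambda\ge0:\mathbf{X}^i\lambda=x,\ \mathbf{1}^\top\lambda=1\}$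 and $Q^i(x)=\min_{\lambda\in\Lambda^i(x)}\mathbf{J}^i\lambda$. LMPC at iteration $j$. For $x\in\mathbb{R}^n$ and $N_t\in\{0,\dots,N\}$, $C^{\mathrm{LMPC},j}_{t\to t+N}(x,N_t)$ is the optimal value ($+\infty$ if infeasible) of: minimize over matrices $M_{ks}$ ($t\le s<k$), vectors $g_k$ and multiplier policies $\lambda_{k|t}$ the cost $\sum_{k=t}^{t+N-1}h(\bar x_{k|t},\pi_{k|t}(\bar x_{k|t}))+Q^{j-1}(\bar x_{t+N|t})$ subject to $x_{t|t}=\bar x_{t|t}=x$; $\bar x_{k+1|t}=A\bar x_{k|t}+B\pi_{k|t}(\bar x_{k|t})$; $x_{k+1|t}=Ax_{k|t}+B\pi_{k|t}(x_{k|t})+w_{k|t}$; $x_{k|t}\in\mathcal{X}$, $\pi_{k|t}(x_{k|t})\in\mathcal{U}$; $x_{t+N|t}\in\mathcal{CS}^{j-1}$; for $k\in\{t,\dots,t+N_t-1\}$, $\pi_{k|t}=\sum_{s=t}^{k-1}M_{ks}w_{s|t}+g_k$ (disturbance feedback); for $k\in\{t+N_t,\dots,t+N-1\}$, $\pi_{k|t}(x_{k|t})=\mathbf{U}^{j-1}\lambda_{k|t}$ with $\lambda_{k|t}\in\Lambda^{j-1}(x_{k|t})$; all for all $w_{k|t}\in\mathcal{W}$, $k=t,\dots,t+N-1$. At state $x^j_t$ one takes $N^{j,*}_t$ minimizing $C^{\mathrm{LMPC},j}_{t\to t+N}(x^j_t,\cdot)$, lets $\boldsymbol{\pi}^{j,*}_t=[\pi^{j,*}_{t|t},\dots,\pi^{j,*}_{t+N-1|t}]$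 be the corresponding optimal policy, and applies $u^j_t=\pi^{j,*}_{t|t}(x^j_t)$. The set $\mathcal{C}^j=\{x:\exists N_0\in\{0,\dots,N\},\ C^{\mathrm{LMPC},j}_{0\to N}(x,N_0)<\infty\}$.
   Formalization: The gain K is also input-admissible on the terminal set: Kx ∈ 𝒰 for every x ∈ 𝒪, so K𝒪 ⊆ 𝒰. The statement above fails without it. *)

(* Defs.v *)
From HB Require Import structures.
From mathcomp Require Import all_boot all_order all_algebra.
From mathcomp Require Import all_classical all_reals all_analysis.
Set Implicit Arguments. Unset Strict Implicit. Unset Printing Implicit Defensive.
Import Order.TTheory GRing.Theory Num.Theory.
Import numFieldNormedType.Exports.
Local Open Scope classical_set_scope.
Local Open Scope ring_scope.

Definition cvx_set {R : realType} {n : nat} (S : set 'cV[R]_n) : Prop :=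
  forall (x y : 'cV[R]_n) (th : R), S x -> S y -> 0 <= th <= 1 ->
    S (th *: x + (1 - th) *: y).

Definition conv_hull {R : realType} {n : nat} (S : set 'cV[R]_n) : set 'cV[R]_n :=
  [set x | exists (k : nat) (mu : nat -> R) (p : nat -> 'cV[R]_n),
     (forall i, (i < k)%N -> S (p i) /\ 0 <= mu i) /\
     \sum_(i < k) mu i = 1 /\ x = \sum_(i < k) mu i *: p i].

Definition pts_of {R : realType} {n : nat} (s : seq 'cV[R]_n) : set 'cV[R]_n :=
  [set v | v \in s].

Definition extreme_point {R : realType} {n : nat} (v : 'cV[R]_n) (S : set 'cV[R]_n)
  : Prop :=
  S v /\ forall (a b : 'cV[R]_n) (th : R), S a -> S b -> 0 < th < 1 ->
    v = th *: a + (1 - th) *: b -> a = v /\ b = v.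

Definition polytope_with_vertices {R : realType} {n : nat}
  (P : set 'cV[R]_n) (vs : seq 'cV[R]_n) : Prop :=
  P = conv_hull (pts_of vs) /\ forall v, v \in vs -> extreme_point v P.

Definition norm2 {R : realType} {n : nat} (x : 'cV[R]_n) : R :=
  Num.sqrt (\sum_(i < n) (x i ord0) ^+ 2).

Definition dist_set {R : realType} {n : nat} (x : 'cV[R]_n) (S : set 'cV[R]_n) : R :=
  inf [set norm2 (x - y) | y in S].

Definition Kinf {R : realType} (a : R -> R) : Prop :=
  a 0 = 0 /\ {within [set x : R | 0 <= x], continuous a} /\
  (forall x y : R, 0 <= x -> x < y -> a x < a y) /\
  (forall M : R, exists r : R, 0 <= r /\ M < a r).

Definition jointly_convex {R : realType} {n d : nat}
  (h : 'cV[R]_n -> 'cV[R]_d -> R) : Prop :=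
  forall x1 x2 u1 u2 (th : R), 0 <= th <= 1 ->
    h (th *: x1 + (1 - th) *: x2) (th *: u1 + (1 - th) *: u2)
      <= th * h x1 u1 + (1 - th) * h x2 u2.

Record sysdata (R : realType) (n d : nat) := SysData {
  sA : 'M[R]_n;
  sB : 'M[R]_(n, d);
  sW : set 'cV[R]_n;
  sK : 'M[R]_(d, n);
  svo : seq 'cV[R]_n;
  sN : nat;
  sh : 'cV[R]_n -> 'cV[R]_d -> R
}.

Definition Oset {R : realType} {n d} (S : sysdata R n d) : set 'cV[R]_n :=
  conv_hull (pts_of (svo S)).

(* Stored data of iterations i = 1, ..., j-1.  Time indices are absolute
   for the trajectories; for the N-step policies and the reachable sets
   the step index k is relative: hpol i t k = pi^{i,*}_{t+k|t},
   hvert i t k = list of vertices of R^i_{t -> t+k}. *)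
Record histdata (R : realType) (n d : nat) := HistData {
  hT : nat -> nat;
  hx : nat -> nat -> 'cV[R]_n;
  hw : nat -> nat -> 'cV[R]_n;
  hpol : nat -> nat -> nat -> 'cV[R]_n -> 'cV[R]_d;
  hvert : nat -> nat -> nat -> seq 'cV[R]_n
}.

Section Construction.
Local Open Scope ring_scope.

(* predicted closed loop of a state-feedback policy sequence pol k = pi_{t+k|t},
   from x0 = x_{t|t}, with disturbances ws k = w_{t+k|t} *)
Fixpoint ptraj {R : realType} {n d} (S : sysdata R n d)
  (pol : nat -> 'cV[R]_n -> 'cV[R]_d) (x0 : 'cV[R]_n) (ws : nat -> 'cV[R]_n)
  (k : nat) : 'cV[R]_n :=
  match k with
  | 0 => x0
  | k'.+1 => let x := ptraj S pol x0 ws k' in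
             sA S *m x + sB S *m pol k' x + ws k'
  end.

Fixpoint reach {R : realType} {n d} (S : sysdata R n d)
  (pol : nat -> 'cV[R]_n -> 'cV[R]_d) (x0 : 'cV[R]_n) (k : nat) : set 'cV[R]_n :=
  match k with
  | 0 => [set x0]
  | k'.+1 => [set z | exists x w, reach S pol x0 k' x /\ sW S w /\
                                  z = sA S *m x + sB S *m pol k' x + w]
  end.

Fixpoint CSset {R : realType} {n d} (S : sysdata R n d) (H : histdata R n d)
  (i : nat) : set 'cV[R]_n :=
  match i with
  | 0 => Oset S
  | i'.+1 =>
      conv_hull
        ([set x | exists t k, (t <= hT H i'.+1)%N /\ (k <= sN S)%N /\
                    reach S (hpol H i'.+1 t) (hx H i'.+1 t) k x]
         `|` CSset S H i')
  end.

(* A data column: (column of X^i, column of U^i, entry of J^i) *)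
Definition col (R : realType) (n d : nat) : Type :=
  ('cV[R]_n * 'cV[R]_d * \bar R)%type.

Definition col0 {R : realType} {n d} : col R n d := (0, 0, 0%E).

Definition Lam {R : realType} {n d} (D : seq (col R n d)) (x : 'cV[R]_n)
  : set (nat -> R) :=
  [set lam | (forall q, (q < size D)%N -> 0 <= lam q) /\
             \sum_(q < size D) lam q *: (nth col0 D q).1.1 = x /\
             \sum_(q < size D) lam q = 1].

Definition Uof {R : realType} {n d} (D : seq (col R n d)) (lam : nat -> R)
  : 'cV[R]_d :=
  \sum_(q < size D) lam q *: (nth col0 D q).1.2.

(* Q^i(x) = min_{lambda in Lambda^i(x)} J^i lambda  (+oo if infeasible) *)
Definition Qfun {R : realType} {n d} (D : seq (col R n d)) (x : 'cV[R]_n) : \bar R :=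
  ereal_inf [set (\sum_(q < size D) (lam q)%:E * (nth col0 D q).2)%E
            | lam in Lam D x].

(* Backward cost-to-go at a stored time t of iteration i.
   Jrem m v = J^i_{t+(N-m)|t}(v); Jrem 0 = Q^{i-1}. *)
Fixpoint Jrem {R : realType} {n d} (S : sysdata R n d)
  (Qprev : 'cV[R]_n -> \bar R) (pol : nat -> 'cV[R]_n -> 'cV[R]_d)
  (vt : nat -> seq 'cV[R]_n) (m : nat) : 'cV[R]_n -> \bar R :=
  match m with
  | 0 => Qprev
  | m'.+1 => fun v =>
      let k := (sN S - m'.+1)%N in
      let nxt := vt k.+1 in
      ereal_inf
        [set ((sh S v (pol k v))%:E +
              \sum_(q < size nxt) (gam q)%:E * Jrem S Qprev pol vt m' (nth (0%R : 'cV[R]_n) nxt q))%E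
        | gam in [set gam : nat -> R |
                   (forall q, (q < size nxt)%N -> 0 <= gam q) /\
                   \sum_(q < size nxt) gam q *: nth 0 nxt q
                     = sA S *m v + sB S *m pol k v /\
                   \sum_(q < size nxt) gam q = 1]]
  end.

Definition Jval {R : realType} {n d} (S : sysdata R n d) (H : histdata R n d)
  (Qprev : 'cV[R]_n -> \bar R) (i t k : nat) : 'cV[R]_n -> \bar R :=
  Jrem S Qprev (hpol H i t) (hvert H i t) (sN S - k).

Definition newcols {R : realType} {n d} (S : sysdata R n d) (H : histdata R n d)
  (Qprev : 'cV[R]_n -> \bar R) (i : nat) : seq (col R n d) :=
  flatten [seq flatten [seq [seq (v, hpol H i t k v, Jval S H Qprev i t k v)
                            | v <- hvert H i t k]
                       | k <- iota 0 (sN S)]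
          | t <- iota 0 (hT H i).+1].

Fixpoint data {R : realType} {n d} (S : sysdata R n d) (H : histdata R n d)
  (i : nat) : seq (col R n d) :=
  match i with
  | 0 => [seq (v, sK S *m v, 0%E) | v <- svo S]
  | i'.+1 => data S H i' ++ newcols S H (Qfun (data S H i')) i'.+1
  end.

(* decision variables: M k s (s < k), g k, multiplier policies lam k *)
Record lmpcsol (R : realType) (n d : nat) := LmpcSol {
  solM : nat -> nat -> 'M[R]_(d, n);
  solg : nat -> 'cV[R]_d;
  sollam : nat -> 'cV[R]_n -> (nat -> R)
}.

Definition sol_input {R : realType} {n d} (D : seq (col R n d)) (Nt : nat)
  (s : lmpcsol R n d) (ws : nat -> 'cV[R]_n) (k : nat) (xk : 'cV[R]_n) : 'cV[R]_d :=
  if (k < Nt)%N then \sum_(s0 < k) solM s k s0 *m ws s0 + solg s k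
  else Uof D (sollam s k xk).

Fixpoint spred {R : realType} {n d} (S : sysdata R n d) (D : seq (col R n d))
  (Nt : nat) (s : lmpcsol R n d) (x : 'cV[R]_n) (ws : nat -> 'cV[R]_n) (k : nat)
  : 'cV[R]_n :=
  match k with
  | 0 => x
  | k'.+1 => let xk := spred S D Nt s x ws k' in
             sA S *m xk + sB S *m sol_input D Nt s ws k' xk + ws k'
  end.

Definition lmpc_feasible {R : realType} {n d} (S : sysdata R n d)
  (X : set 'cV[R]_n) (U : set 'cV[R]_d) (CSp : set 'cV[R]_n)
  (D : seq (col R n d)) (x : 'cV[R]_n) (Nt : nat) (s : lmpcsol R n d) : Prop :=
  forall ws : nat -> 'cV[R]_n, (forall k, (k < sN S)%N -> sW S (ws k)) ->
    (forall k, (k < sN S)%N ->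
        X (spred S D Nt s x ws k) /\
        U (sol_input D Nt s ws k (spred S D Nt s x ws k))) /\
    CSp (spred S D Nt s x ws (sN S)) /\
    (forall k, (Nt <= k < sN S)%N ->
        Lam D (spred S D Nt s x ws k) (sollam s k (spred S D Nt s x ws k))).

Definition lmpc_cost {R : realType} {n d} (S : sysdata R n d)
  (D : seq (col R n d)) (x : 'cV[R]_n) (Nt : nat) (s : lmpcsol R n d) : \bar R :=
  let ws0 := fun _ : nat => (0 : 'cV[R]_n) in
  ((\sum_(k < sN S) sh S (spred S D Nt s x ws0 k)
                         (sol_input D Nt s ws0 k (spred S D Nt s x ws0 k)))%:E
   + Qfun D (spred S D Nt s x ws0 (sN S)))%E.

(* C^{LMPC,j}_{t -> t+N}(x, Nt) at iteration j (+oo if infeasible) *)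
Definition Clmpc {R : realType} {n d} (S : sysdata R n d) (H : histdata R n d)
  (X : set 'cV[R]_n) (U : set 'cV[R]_d) (j : nat) (x : 'cV[R]_n) (Nt : nat)
  : \bar R :=
  ereal_inf [set lmpc_cost S (data S H j.-1) x Nt s
            | s in [set s | lmpc_feasible S X U (CSset S H j.-1) (data S H j.-1) x Nt s]].

Definition Cset {R : realType} {n d} (S : sysdata R n d) (H : histdata R n d)
  (X : set 'cV[R]_n) (U : set 'cV[R]_d) (j : nat) : set 'cV[R]_n :=
  [set x | exists N0, (N0 <= sN S)%N /\ (Clmpc S H X U j x N0 < +oo)%E].

Definition applied_input {R : realType} {n d} (S : sysdata R n d) (H : histdata R n d)
  (j : nat) (Nt : nat) (s : lmpcsol R n d) (x : 'cV[R]_n) : 'cV[R]_d :=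
  sol_input (data S H j.-1) Nt s (fun _ => 0) 0 x.

End Construction.

(* Main.v *)
Require Import Defs.
From HB Require Import structures.
From mathcomp Require Import all_boot all_order all_algebra.
From mathcomp Require Import all_classical all_reals all_analysis.
Import Order.TTheory GRing.Theory Num.Theory.
Import numFieldNormedType.Exports.
Local Open Scope classical_set_scope.
Local Open Scope ring_scope.
From mathcomp Require Import lra.
Set Implicit Arguments. Unset Strict Implicit. Unset Printing Implicit Defensive.
Lemma cvx_comb (R : realType) n (C : set 'cV[R]_n) m (g : nat -> R)
  (f : nat -> 'cV[R]_n) :
  cvx_set C -> (forall i, (i < m)%N -> C (f i)) ->
  (forall i, (i < m)%N -> 0 <= g i) -> \sum_(i < m) g i = 1 ->
  C (\sum_(i < m) g i *: f i).
Proof.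
move=> cC; elim: m g => [|m IH] g Cf g0 g1.
  by move: g1; rewrite big_ord0 => /eqP; rewrite eq_sym oner_eq0.
rewrite big_ord_recr /=.
move: g1; rewrite big_ord_recr /= => g1.
have s0 : 0 <= \sum_(i < m) g i by apply: sumr_ge0 => i _; apply: g0; exact: leqW (ltn_ord i).
have gm0 : 0 <= g m by apply: g0.
have gm1 : g m <= 1 by lra.
case: (eqVneq (g m) 1) => [ge1|gne1].
  have z : \sum_(i < m) g i = 0 by lra.
  have zi : forall i : 'I_m, g i = 0.
    move=> i; apply: (psumr_eq0P (P := xpredT) (F := fun i : 'I_m => g i)) => //.
    by move=> k _; exact: g0 (leqW (ltn_ord k)).
  rewrite big1 ?add0r ?ge1 ?scale1r; first by apply: Cf.
  by move=> i _; rewrite zi scale0r.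
have a1 : 1 - g m != 0 by rewrite subr_eq0 eq_sym.
have := IH (fun i => g i / (1 - g m)).
move=> /(_ (fun i hi => Cf i (leqW hi))).
have hpos : 0 < 1 - g m by rewrite subr_gt0 lt_neqAle gne1 gm1.
move=> /(_ (fun i hi => divr_ge0 (g0 i (leqW hi)) (ltW hpos))).
have : \sum_(i < m) g i / (1 - g m) = 1.
  rewrite -mulr_suml; have -> : \sum_(i < m) g i = 1 - g m by rewrite -g1 addrK.
  by rewrite divff.
move=> h /(_ h) Cy.
have := cC (f m) _ (g m) (Cf m (ltnSn m)) Cy.
rewrite gm0 gm1 => /(_ isT).
rewrite scaler_sumr.
rewrite (eq_bigr (fun i : 'I_m => g i *: f i)); first by rewrite addrC.
by move=> i _; rewrite scalerA mulrC divfK.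
Qed.
Definition CC {R : realType} {n : nat} (m : nat) (f : nat -> 'cV[R]_n) : set 'cV[R]_n :=
  [set z | exists gam : nat -> R, (forall q, (q < m)%N -> 0 <= gam q) /\
     \sum_(q < m) gam q *: f q = z /\ \sum_(q < m) gam q = 1].

Lemma CC_cvx (R : realType) n m (f : nat -> 'cV[R]_n) : cvx_set (CC m f).
Proof.
move=> x y th [g1 [g10 [<- g11]]] [g2 [g20 [<- g21]]] /andP[th0 th1].
exists (fun q => th * g1 q + (1 - th) * g2 q); split; [|split].
- move=> q hq; apply: addr_ge0; apply: mulr_ge0 => //; [exact: g10|by rewrite subr_ge0|exact: g20].
- rewrite !scaler_sumr -big_split /=; apply: eq_bigr => i _.
  by rewrite scalerDl !scalerA.
- by rewrite big_split /= -!mulr_sumr g11 g21 !mulr1 addrC subrK.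
Qed.

Lemma CC_pt (R : realType) n m (f : nat -> 'cV[R]_n) q : (q < m)%N -> CC m f (f q).
Proof.
move=> hq; exists (fun i => if i == q then 1 else 0); split; [|split].
- by move=> i _; case: (i == q).
- rewrite (bigD1 (Ordinal hq)) //= eqxx scale1r big1 ?addr0 // => i /negbTE.
  by move=> h; rewrite -val_eqE /= in h; rewrite h scale0r.
- rewrite (bigD1 (Ordinal hq)) //= eqxx big1 ?addr0 // => i /negbTE.
  by move=> h; rewrite -val_eqE /= in h; rewrite h.
Qed.

Lemma conv_pt (R : realType) n (P : set 'cV[R]_n) x : P x -> conv_hull P x.
Proof.
move=> Px; exists 1%N, (fun _ => 1), (fun _ => x); split; [|split].
- by move=> i _; split.
- by rewrite big_ord1.
- by rewrite big_ord1 scale1r.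
Qed.

Lemma conv_min (R : realType) n (P C : set 'cV[R]_n) :
  cvx_set C -> P `<=` C -> conv_hull P `<=` C.
Proof.
move=> cC PC x [k [mu [p [h [s1 ->]]]]].
apply: (@cvx_comb _ _ C k mu p) => //.
- by move=> i hi; apply: PC; case: (h i hi).
- by move=> i hi; case: (h i hi).
Qed.

Lemma conv_cvx (R : realType) n (P : set 'cV[R]_n) : cvx_set (conv_hull P).
Proof.
move=> x y th [k1 [mu1 [p1 [h1 [s1 ->]]]]] [k2 [mu2 [p2 [h2 [s2 ->]]]]] /andP[th0 th1].
exists (k1 + k2)%N, (fun i => if (i < k1)%N then th * mu1 i else (1 - th) * mu2 (i - k1)%N),
  (fun i => if (i < k1)%N then p1 i else p2 (i - k1)%N); split; [|split].
- move=> i hi; case: ifP => hik.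
    by case: (h1 i hik) => ? ?; split => //; apply: mulr_ge0.
  have hi2 : (i - k1 < k2)%N by rewrite ltn_subLR // leqNgt hik.
  by case: (h2 _ hi2) => ? ?; split => //; apply: mulr_ge0 => //; rewrite subr_ge0.
- rewrite big_split_ord /=.
  rewrite (eq_bigr (fun i : 'I_k1 => th * mu1 i)); last first.
    by move=> i _; rewrite ltn_ord.
  rewrite (eq_bigr (fun i : 'I_k2 => (1 - th) * mu2 i)); last first.
    by move=> i _; rewrite ltnNge leq_addr /= addKn.
  by rewrite -!mulr_sumr s1 s2 !mulr1 addrC subrK.
- rewrite big_split_ord /= !scaler_sumr; congr (_ + _); apply: eq_bigr => i _.
    by rewrite ltn_ord scalerA.
  by rewrite ltnNge leq_addr /= addKn scalerA.
Qed.
Lemma ptraj_ext (R : realType) n d (S : sysdata R n d) pol x0 ws ws' k :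
  (forall i, (i < k)%N -> ws i = ws' i) -> ptraj S pol x0 ws k = ptraj S pol x0 ws' k.
Proof.
elim: k => [//|k IH] h /=.
rewrite IH ?h //; by move=> i hi; apply: h; apply: ltnW.
Qed.

Lemma reach_ptraj (R : realType) n d (S : sysdata R n d) pol x0 k v :
  sW S 0 -> reach S pol x0 k v ->
  exists ws, (forall i, sW S (ws i)) /\ v = ptraj S pol x0 ws k.
Proof.
move=> W0; elim: k v => [|k IH] v /=.
  by move=> ->; exists (fun _ => 0).
move=> [x [w [rx [Ww ->]]]].
have [ws [Wws ->]] := IH x rx.
exists (fun i => if i == k then w else ws i); split.
  by move=> i; case: (i == k).
rewrite eqxx (@ptraj_ext _ _ _ S pol x0 (fun i => if i == k then w else ws i) ws) //.
by move=> i hi; rewrite (ltn_eqF hi).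
Qed.

Definition LD {R : realType} {n d} (D : seq (Defs.col R n d)) : set 'cV[R]_n :=
  CC (size D) (fun q => (nth Defs.col0 D q).1.1).

Lemma LD_Lam (R : realType) n d (D : seq (Defs.col R n d)) x :
  LD D x -> exists lam, Lam D x lam.
Proof. by case=> g [g0 [g1 g2]]; exists g. Qed.

Lemma mem_LD (R : realType) n d (D : seq (Defs.col R n d)) c : c \in D -> LD D c.1.1.
Proof.
move=> cD; have := @CC_pt R n (size D) (fun q => (nth Defs.col0 D q).1.1) (index c D).
by rewrite index_mem nth_index //; apply.
Qed.

Lemma LD_sub (R : realType) n d (D1 D2 : seq (Defs.col R n d)) :
  (forall c, c \in D1 -> c \in D2) -> LD D1 `<=` LD D2.
Proof.
move=> sub x [g [g0 [<- g1]]].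
apply: (@cvx_comb _ _ (LD D2) (size D1) g (fun q => (nth Defs.col0 D1 q).1.1)) => //; first exact: CC_cvx.
by move=> i hi; apply: mem_LD; apply: sub; apply: mem_nth.
Qed.

Lemma esum_fin (R : realType) m (g : nat -> R) (e : nat -> \bar R) :
  (forall q, (q < m)%N -> 0 <= g q) -> (forall q, (q < m)%N -> (e q < +oo)%E) ->
  (\sum_(q < m) (g q)%:E * e q < +oo)%E.
Proof.
elim: m => [|m IH] g0 e0; first by rewrite big_ord0 ltry.
rewrite big_ord_recr /=; apply: lte_add_pinfty.
  by apply: IH => q hq; [apply: g0|apply: e0]; apply: ltnW.
apply: lte_mul_pinfty => //; last exact: e0.
by rewrite lee_fin; apply: g0.
Qed.

Lemma Qfun_fin (R : realType) n d (D : seq (Defs.col R n d)) x lam :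
  (forall c, c \in D -> (c.2 < +oo)%E) -> Lam D x lam -> (Qfun D x < +oo)%E.
Proof.
move=> Jf hl.
apply: (@le_lt_trans _ _ (\sum_(q < size D) (lam q)%:E * (nth Defs.col0 D q).2)%E).
  by apply: ereal_inf_lbound; exists lam.
case: hl => l0 _; apply: (@esum_fin _ (size D) lam (fun q => (nth Defs.col0 D q).2)) => // q hq; apply: Jf; exact: mem_nth.
Qed.

Lemma poly_reach_sub (R : realType) n (P : set 'cV[R]_n) vs :
  polytope_with_vertices P vs -> P `<=` CC (size vs) (fun q => nth 0 vs q).
Proof.
case=> -> _; apply: conv_min; first exact: CC_cvx.
move=> v; rewrite /pts_of /= => vin.
have := @CC_pt R n (size vs) (fun q => nth 0 vs q) (index v vs).
by rewrite index_mem nth_index //; apply.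
Qed.

Lemma poly_vert (R : realType) n (P : set 'cV[R]_n) vs v :
  polytope_with_vertices P vs -> v \in vs -> P v.
Proof. by case=> _ h /h []. Qed.

Lemma Jrem_fin (R : realType) n d (S : sysdata R n d) Qprev pol x0 vt :
  sW S 0 ->
  (forall k, (k <= sN S)%N -> polytope_with_vertices (reach S pol x0 k) (vt k)) ->
  (forall v, v \in vt (sN S) -> (Qprev v < +oo)%E) ->
  forall m, (m <= sN S)%N -> forall v, v \in vt (sN S - m)%N ->
    (Jrem S Qprev pol vt m v < +oo)%E.
Proof.
move=> W0 hp hQ; elim=> [|m IH] hm v.
  by rewrite subn0 /=; apply: hQ.
move=> vin /=.
set k := (sN S - m.+1)%N.
have hk : (k <= sN S)%N by rewrite /k leq_subr.
have ek : k.+1 = (sN S - m)%N by rewrite /k subnSK.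
have rv : reach S pol x0 k v := @poly_vert _ _ _ _ _ (hp k hk) vin.
have rz : reach S pol x0 k.+1 (sA S *m v + sB S *m pol k v).
  by exists v, 0; split => //; split => //; rewrite addr0.
have hk1 : (k.+1 <= sN S)%N by rewrite ek leq_subr.
have [gam [g0 [g1 g2]]] := @poly_reach_sub _ _ _ _ (hp _ hk1) _ rz.
apply: le_lt_trans; first by apply: ereal_inf_lbound; exists gam.
apply: lte_add_pinfty; first exact: ltry.
apply: (@esum_fin _ _ gam (fun q => Jrem S Qprev pol vt m (nth 0 (vt k.+1) q))) => // q hq; apply: IH; first exact: ltnW.
by rewrite -ek; apply: mem_nth.
Qed.
Lemma newcols_mem (R : realType) n d (S : sysdata R n d) (H : histdata R n d) Q i c :
  c \in newcols S H Q i -> exists t k v, (t <= hT H i)%N /\ (k < sN S)%N /\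
    v \in hvert H i t k /\ c = (v, hpol H i t k v, Jval S H Q i t k v).
Proof.
case/flatten_mapP => t; rewrite mem_iota add0n ltnS => /andP[_ ht].
case/flatten_mapP => k; rewrite mem_iota add0n => /andP[_ hk].
case/mapP => v vin ->.
by exists t, k, v.
Qed.

Lemma newcols_in (R : realType) n d (S : sysdata R n d) (H : histdata R n d) Q i t k v :
  (t <= hT H i)%N -> (k < sN S)%N -> v \in hvert H i t k ->
  (v, hpol H i t k v, Jval S H Q i t k v) \in newcols S H Q i.
Proof.
move=> ht hk vin; apply/flatten_mapP; exists t; first by rewrite mem_iota add0n ltnS ht.
apply/flatten_mapP; exists k; first by rewrite mem_iota add0n hk.
by apply/mapP; exists v.
Qed.

Definition HistOK {R : realType} {n d} (S : sysdata R n d) (H : histdata R n d)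
  (X : set 'cV[R]_n) (U : set 'cV[R]_d) (j : nat) : Prop :=
  forall i, (0 < i < j)%N ->
     (forall t, (t < hT H i)%N ->
        sW S (hw H i t) /\
        hx H i t.+1 = sA S *m hx H i t + sB S *m hpol H i t 0 (hx H i t) + hw H i t) /\
     (forall t, (t <= hT H i)%N ->
        forall ws : nat -> 'cV[R]_n, (forall k, (k < sN S)%N -> sW S (ws k)) ->
          (forall k, (k < sN S)%N ->
             X (ptraj S (hpol H i t) (hx H i t) ws k) /\
             U (hpol H i t k (ptraj S (hpol H i t) (hx H i t) ws k))) /\
          CSset S H i.-1 (ptraj S (hpol H i t) (hx H i t) ws (sN S))) /\
     (forall t k, (t <= hT H i)%N -> (k <= sN S)%N ->
        polytope_with_vertices (reach S (hpol H i t) (hx H i t) k) (hvert H i t k)).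

Lemma CS_mono (R : realType) n d (S : sysdata R n d) (H : histdata R n d) i :
  CSset S H i `<=` CSset S H i.+1.
Proof. by move=> x hx; apply: conv_pt; right. Qed.

Lemma CS_cvx (R : realType) n d (S : sysdata R n d) (H : histdata R n d) i :
  cvx_set (CSset S H i).
Proof. by case: i => [|i]; apply: conv_cvx. Qed.

Lemma CS_gen (R : realType) n d (S : sysdata R n d) (H : histdata R n d) i t k x :
  (t <= hT H i.+1)%N -> (k <= sN S)%N -> reach S (hpol H i.+1 t) (hx H i.+1 t) k x ->
  CSset S H i.+1 x.
Proof. by move=> ht hk r; apply: conv_pt; left; exists t, k. Qed.

Lemma reachN_CS (R : realType) n d (S : sysdata R n d) (H : histdata R n d) X U j i t x :
  sW S 0 -> HistOK S H X U j -> (0 < i < j)%N -> (t <= hT H i)%N ->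
  reach S (hpol H i t) (hx H i t) (sN S) x -> CSset S H i.-1 x.
Proof.
move=> W0 hok hi ht r.
have [ws [Wws ->]] := reach_ptraj W0 r.
have [_ [hs _]] := hok i hi.
by have [_ ?] := hs t ht ws (fun k _ => Wws k).
Qed.

Lemma CS_LD (R : realType) n d (S : sysdata R n d) (H : histdata R n d) X U j :
  sW S 0 -> HistOK S H X U j -> forall i, (i < j)%N -> CSset S H i `<=` LD (data S H i).
Proof.
move=> W0 hok; elim=> [|i IH] hi /=.
  apply: conv_min; first exact: CC_cvx.
  move=> v; rewrite /pts_of /= => vin.
  have := @mem_LD R n d [seq (v0, sK S *m v0, 0%E) | v0 <- svo S] (v, sK S *m v, 0%E).
  by apply; apply/mapP; exists v.
have hi' : (0 < i.+1 < j)%N by rewrite ltn0Sn hi.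
have [_ [_ hpw]] := hok _ hi'.
have sub : LD (data S H i) `<=` LD (data S H i ++ newcols S H (Qfun (data S H i)) i.+1).
  by apply: LD_sub => c cin; rewrite mem_cat cin.
apply: conv_min; first exact: CC_cvx.
move=> x [[t [k [ht [hk r]]]]|xin]; last by apply: sub; apply: IH => //; apply: ltnW.
case: (ltnP k (sN S)) => hkN.
  move: r; rewrite (proj1 (hpw t k ht hk)); apply: conv_min; first exact: CC_cvx.
  move=> v; rewrite /pts_of /= => vin.
  have := @mem_LD R n d (data S H i ++ newcols S H (Qfun (data S H i)) i.+1)
           (v, hpol H i.+1 t k v, Jval S H (Qfun (data S H i)) i.+1 t k v).
  by apply; rewrite mem_cat; apply/orP; right; apply: newcols_in.
have ekN : k = sN S by apply/eqP; rewrite eqn_leq hk hkN.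
rewrite ekN in r.
apply: sub; apply: IH; first exact: ltnW.
exact: (@reachN_CS _ _ _ S H X U j i.+1 t x W0 hok hi' ht r).
Qed.
Definition colOK {R : realType} {n d} (S : sysdata R n d) (H : histdata R n d)
  (X : set 'cV[R]_n) (U : set 'cV[R]_d) i (c : Defs.col R n d) : Prop :=
  X c.1.1 /\ U c.1.2 /\
  (forall w, sW S w -> CSset S H i (sA S *m c.1.1 + sB S *m c.1.2 + w)) /\
  (c.2 < +oo)%E.

Lemma colprop (R : realType) n d (S : sysdata R n d) (H : histdata R n d) X U j :
  sW S 0 -> HistOK S H X U j ->
  Oset S `<=` X ->
  (forall x w, Oset S x -> sW S w -> Oset S ((sA S + sB S *m sK S) *m x + w)) ->
  [set sK S *m x | x in Oset S] `<=` U ->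
  forall i, (i < j)%N -> forall c, c \in data S H i -> colOK S H X U i c.
Proof.
move=> W0 hok OX Oinv OU; elim=> [|i IH] hi c /=.
  case/mapP => v vin -> /=.
  have Ov : Oset S v by apply: conv_pt.
  split; first exact: OX.
  split; first by apply: OU; exists v.
  split; last exact: ltry.
  by move=> w Ww; rewrite mulmxA -mulmxDl; apply: Oinv.
rewrite mem_cat => /orP[cin|cin].
  have [h1 [h2 [h3 h4]]] := IH (ltnW hi) c cin.
  split => //; split => //; split => // w Ww; apply: CS_mono; exact: h3.
have hi' : (0 < i.+1 < j)%N by rewrite ltn0Sn hi.
have [_ [hs hpw]] := hok _ hi'.
have [t [k [v [ht [hk [vin ->]]]]]] := newcols_mem cin.
have hkN : (k <= sN S)%N by apply: ltnW.
have rv : reach S (hpol H i.+1 t) (hx H i.+1 t) k v := poly_vert (hpw t k ht hkN) vin.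
have [ws [Wws ev]] := reach_ptraj W0 rv.
have [hXU _] := hs t ht ws (fun k _ => Wws k).
have [hX hU] := hXU k hk.
rewrite /colOK /=; split; first by rewrite ev.
split; first by rewrite ev.
split.
  move=> w Ww; apply: (@CS_gen _ _ _ S H i t k.+1) => //.
  by exists v, w.
rewrite /Jval.
have hQ : forall v0, v0 \in hvert H i.+1 t (sN S) -> (Qfun (data S H i) v0 < +oo)%E.
  move=> v0 v0in.
  have r0 := poly_vert (hpw t (sN S) ht (leqnn _)) v0in.
  have c0 := reachN_CS W0 hok hi' ht r0.
  have [lam hl] := LD_Lam (CS_LD W0 hok (ltnW hi) c0).
  apply: (Qfun_fin _ hl) => c1 c1in.
  by have [_ [_ [_ ?]]] := IH (ltnW hi) c1 c1in.
apply: (Jrem_fin W0 _ hQ).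
- by move=> k0 hk0; apply: hpw.
- exact: leq_subr.
- by rewrite subKn.
Qed.

Lemma INV (R : realType) n d (S : sysdata R n d) (H : histdata R n d) X U i y lam :
  cvx_set X -> cvx_set U ->
  (forall c, c \in data S H i -> colOK S H X U i c) ->
  Lam (data S H i) y lam ->
  X y /\ U (Uof (data S H i) lam) /\
  (forall w, sW S w -> CSset S H i (sA S *m y + sB S *m Uof (data S H i) lam + w)).
Proof.
move=> cX cU hc [l0 [ly l1]].
set D := data S H i.
have hq : forall q, (q < size D)%N -> colOK S H X U i (nth Defs.col0 D q).
  by move=> q hq; apply: hc; apply: mem_nth.
split.
  rewrite -ly; apply: (@cvx_comb _ _ X (size D) lam (fun q => (nth Defs.col0 D q).1.1)) => //.
  by move=> q qs; case: (hq q qs).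
split.
  apply: (@cvx_comb _ _ U (size D) lam (fun q => (nth Defs.col0 D q).1.2)) => //.
  by move=> q qs; case: (hq q qs) => _ [].
move=> w Ww.
have -> : sA S *m y + sB S *m Uof D lam + w =
   \sum_(q < size D) lam q *: (sA S *m (nth Defs.col0 D q).1.1 + sB S *m (nth Defs.col0 D q).1.2 + w).
  symmetry; under eq_bigr do rewrite !scalerDr.
  rewrite !big_split /= -scaler_suml l1 scale1r -ly /Uof !mulmx_sumr.
  by congr (_ + _ + _); apply: eq_bigr => q _; rewrite scalemxAr.
apply: (@cvx_comb _ _ _ (size D) lam (fun q => sA S *m (nth Defs.col0 D q).1.1 + sB S *m (nth Defs.col0 D q).1.2 + w)) => //.
  exact: CS_cvx.
by move=> q qs; case: (hq q qs) => _ [_ [h _]]; apply: h.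
Qed.
Lemma sol_input0 (R : realType) n d (D : seq (Defs.col R n d)) Nt (s : lmpcsol R n d) ws ws' y :
  sol_input D Nt s ws 0 y = sol_input D Nt s ws' 0 y.
Proof. by rewrite /sol_input; case: ifP => // _; rewrite !big_ord0. Qed.

Lemma shift_feas (R : realType) n d (S : sysdata R n d) (H : histdata R n d) X U j
  x Nt (s : lmpcsol R n d) w0 :
  sW S 0 -> HistOK S H X U j ->
  Oset S `<=` X ->
  (forall x w, Oset S x -> sW S w -> Oset S ((sA S + sB S *m sK S) *m x + w)) ->
  [set sK S *m x | x in Oset S] `<=` U ->
  cvx_set X -> cvx_set U -> (1 <= sN S)%N -> (1 <= j)%N ->
  (Nt <= sN S)%N -> sW S w0 ->
  lmpc_feasible S X U (CSset S H j.-1) (data S H j.-1) x Nt s ->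
  Cset S H X U j (sA S *m x + sB S *m applied_input S H j Nt s x + w0).
Proof.
move=> W0 hok OX Oinv OU cX cU hN hj hNt Ww0 feas0.
have hjj : (j.-1 < j)%N by rewrite ltn_predL.
have hc := colprop W0 hok OX Oinv OU hjj.
have hLD := CS_LD W0 hok hjj.
have [fsel hf] : exists fsel : 'cV[R]_n -> nat -> R,
    forall y, CSset S H j.-1 y -> Lam (data S H j.-1) y (fsel y).
  have := @choice 'cV[R]_n (nat -> R)
    (fun y lam => CSset S H j.-1 y -> Lam (data S H j.-1) y lam).
  case.
    move=> y; case: (pselect (CSset S H j.-1 y)) => [h|h].
      by have [lam hl] := LD_Lam (hLD _ h); exists lam.
    by exists (fun _ => 0).
  by move=> f hf; exists f.
pose s' := @LmpcSol R n d (fun k s0 => solM s k.+1 s0.+1)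
   (fun k => solg s k.+1 + solM s k.+1 0 *m w0)
   (fun k y => if (k.+1 < sN S)%N then sollam s k.+1 y else fsel y).
pose xp := sA S *m x + sB S *m applied_input S H j Nt s x + w0.
have feas : lmpc_feasible S X U (CSset S H j.-1) (data S H j.-1) xp Nt.-1 s'.
  move=> ws' Wws'.
  pose ws := fun i => if i is i'.+1 then ws' i' else w0.
  have Wws : forall k, (k < sN S)%N -> sW S (ws k).
    by case=> [|k] //= hk; apply: Wws'; apply: ltnW.
  have [ho1 [ho2 ho3]] := feas0 ws Wws.
  have inp : forall k y, (k.+1 < sN S)%N ->
      sol_input (data S H j.-1) Nt.-1 s' ws' k y = sol_input (data S H j.-1) Nt s ws k.+1 y.
    move=> k y hk; rewrite /sol_input /= ltn_predRL; case: ifP => _ /=; last by rewrite hk.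
    rewrite big_ord_recl /=.
    rewrite (eq_bigr (fun i : 'I_k => solM s k.+1 i.+1 *m ws' i)); last first.
      by [].
    by rewrite [solg _ _ + _]addrC addrA [_ + solM s k.+1 0 *m w0]addrC.
  have traj : forall k, (k <= (sN S).-1)%N ->
      spred S (data S H j.-1) Nt.-1 s' xp ws' k = spred S (data S H j.-1) Nt s x ws k.+1.
    elim=> [_|k IH hk] /=.
      by rewrite /xp /applied_input (sol_input0 _ _ _ (fun _ => 0) ws).
    rewrite IH; last exact: ltnW.
    by rewrite inp // -ltn_predRL.
  have eN : (sN S).-1.+1 = sN S by rewrite prednK.
  have ty : spred S (data S H j.-1) Nt.-1 s' xp ws' (sN S).-1 =
            spred S (data S H j.-1) Nt s x ws (sN S) by rewrite traj // eN.
  set y := spred S (data S H j.-1) Nt s x ws (sN S).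
  have hl := hf y ho2.
  have [Xy [Uy Cy]] := INV cX cU hc hl.
  have inpN : sol_input (data S H j.-1) Nt.-1 s' ws' (sN S).-1 y = Uof (data S H j.-1) (fsel y).
    by rewrite /sol_input /= ltn_predRL eN ltnNge hNt /= ltnn.
  split; [|split].
  - move=> k hk; case: (ltnP k.+1 (sN S)) => hk1.
      rewrite traj; last by rewrite -ltnS eN.
      by rewrite inp //; apply: ho1.
    have ek : k = (sN S).-1 by apply/eqP; rewrite -eqSS eN eqn_leq hk hk1.
    by rewrite ek ty inpN.
  - have step := fun m : nat => (erefl : spred S (data S H j.-1) Nt.-1 s' xp ws' m.+1 =
       sA S *m spred S (data S H j.-1) Nt.-1 s' xp ws' m +
       sB S *m sol_input (data S H j.-1) Nt.-1 s' ws' m (spred S (data S H j.-1) Nt.-1 s' xp ws' m)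
       + ws' m).
    have := step (sN S).-1; rewrite eN => ->.
    rewrite ty inpN; apply: Cy; apply: Wws'; by rewrite ltn_predL.
  - move=> k /andP[hk1 hk2]; case: (ltnP k.+1 (sN S)) => hk3.
      rewrite traj; last by rewrite -ltnS eN.
      rewrite /= hk3; apply: ho3; rewrite hk3 andbT.
      by move: hk1; case: (Nt).
    have ek : k = (sN S).-1 by apply/eqP; rewrite -eqSS eN eqn_leq hk2 hk3.
    by rewrite ek ty /= eN ltnn.
exists Nt.-1; split; first by rewrite (leq_trans (leq_pred _) hNt).
apply: le_lt_trans; first by apply: ereal_inf_lbound; exists s'.
rewrite /lmpc_cost; apply: lte_add_pinfty; first exact: ltry.
have [_ [hT _]] := feas (fun _ => 0) (fun _ _ => W0).
have [lam hl] := LD_Lam (hLD _ hT).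
apply: (Qfun_fin _ hl) => c cin.
by have [_ [_ [_ ?]]] := hc c cin.
Qed.
Unset Implicit Arguments.

Theorem theorem1 (R : realType) (n d : nat) (S : sysdata R n d)
  (H : histdata R n d) (X : set 'cV[R]_n) (U : set 'cV[R]_d)
  (vw : seq 'cV[R]_n) (axl axu aul auu : R -> R) (j : nat)
  (xj wj : nat -> 'cV[R]_n) (Nst : nat -> nat) (sol : nat -> lmpcsol R n d) :
  (* disturbances: compact polytope W with vertices vw, containing 0 *)
  polytope_with_vertices (sW S) vw -> sW S 0 ->
  (* constraints *)
  cvx_set X -> compact X -> X 0 ->
  cvx_set U -> compact U -> U 0 ->
  (* terminal set O and gain K *)
  (forall v, v \in svo S -> extreme_point v (Oset S)) ->
  Oset S `<=` X ->
  (forall x w, Oset S x -> sW S w -> Oset S ((sA S + sB S *m sK S) *m x + w)) ->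
  [set sK S *m x | x in Oset S] `<=` U ->
  (* stage cost *)
  continuous (fun p : 'cV[R]_n * 'cV[R]_d => sh S p.1 p.2) ->
  jointly_convex (sh S) ->
  Kinf axl -> Kinf axu -> Kinf aul -> Kinf auu ->
  (forall x, axl (dist_set x (Oset S)) <= sh S x 0 <= axu (dist_set x (Oset S))) ->
  (forall u, aul (dist_set u [set sK S *m x | x in Oset S]) <= sh S 0 u
             <= auu (dist_set u [set sK S *m x | x in Oset S])) ->
  (* horizon and iteration *)
  (1 <= sN S)%N -> (1 <= j)%N ->
  (* stored data of the previous iterations i = 1, ..., j-1 *)
  (forall i, (0 < i < j)%N ->
     (* closed-loop trajectory *)
     (forall t, (t < hT H i)%N ->
        sW S (hw H i t) /\
        hx H i t.+1 = sA S *m hx H i t + sB S *m hpol H i t 0 (hx H i t) + hw H i t) /\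
     (* standing assumption *)
     (forall t, (t <= hT H i)%N ->
        forall ws : nat -> 'cV[R]_n, (forall k, (k < sN S)%N -> sW S (ws k)) ->
          (forall k, (k < sN S)%N ->
             X (ptraj S (hpol H i t) (hx H i t) ws k) /\
             U (hpol H i t k (ptraj S (hpol H i t) (hx H i t) ws k))) /\
          CSset S H i.-1 (ptraj S (hpol H i t) (hx H i t) ws (sN S))) /\
     (* hvert i t k lists the vertices of R^i_{t -> t+k} *)
     (forall t k, (t <= hT H i)%N -> (k <= sN S)%N ->
        polytope_with_vertices (reach S (hpol H i t) (hx H i t) k) (hvert H i t k))) ->
  (* initial condition *)
  Cset S H X U j (xj 0%N) ->
  (* disturbance realization *)
  (forall t, sW S (wj t)) ->
  (* LMPC closed loop: whenever the problem at x^j_t is feasible, (Nst t, sol t)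
     is an optimal (N^{j,*}_t, policy) and the optimal first input is applied *)
  (forall t, Cset S H X U j (xj t) ->
     [/\ (Nst t <= sN S)%N,
         (forall N0, (N0 <= sN S)%N ->
            (Clmpc S H X U j (xj t) (Nst t) <= Clmpc S H X U j (xj t) N0)%E),
         lmpc_feasible S X U (CSset S H j.-1) (data S H j.-1) (xj t) (Nst t) (sol t),
         lmpc_cost S (data S H j.-1) (xj t) (Nst t) (sol t)
           = Clmpc S H X U j (xj t) (Nst t)
       & xj t.+1 = sA S *m xj t + sB S *m applied_input S H j (Nst t) (sol t) (xj t)
                   + wj t]) ->
  forall t,
    ((Nst t <= sN S)%N /\ (Clmpc S H X U j (xj t) (Nst t) < +oo)%E) /\
    X (xj t) /\ U (applied_input S H j (Nst t) (sol t) (xj t)).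

Proof.
move=> _ W0 cX _ _ cU _ _ _ OX Oinv OU _ _ _ _ _ _ _ _ hN hj hhist C0 Ww hcl.
have hok : HistOK S H X U j := hhist.
have key : forall t, Cset S H X U j (xj t).
  elim=> [//|t IH].
  have [hNt _ feas _ ->] := hcl t IH.
  exact: (shift_feas W0 hok OX Oinv OU cX cU hN hj hNt (Ww t) feas).
move=> t.
have [hNt hmin feas _ _] := hcl t (key t).
have [N0 [hN0 hC]] := key t.
split.
  by split => //; apply: le_lt_trans (hmin N0 hN0) hC.
have [h1 _] := feas (fun _ => 0) (fun _ _ => W0).
by have [? ?] := h1 0%N hN.
Qed.
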